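(* Let $\{\varphi_n\}_{n\ge1}$ be an orthonormal system on $[0,1]$ and let $\{d_n\}$ be a sequence of real numbers with $d_n=O\!\left(\frac{\sqrt{n}}{\log^2(n+1)}\right)$. For a real sequence $b=\{b_n\}\in \ell_2$ put $$Q_n(d,b,x)=\sum_{k=1}^{n} d_k b_k \log k\,\varphi_k(x),\qquad B_n(d,b)=\max_{1\le i<n}\left|\int_0^{i/n}Q_n(d,b,x)\,dx\right|,\qquad U_n(f)=\int_0^1 f(x)Q_n(d,b,x)\,dx.$$ If for some $b\in\ell_2$ one has $\limsup_{n\to\infty}B_n(d,b)=+\infty$, then there exists a function $g\in A$ such that $\limsup_{n\to\infty}|U_n(g)|=+\infty$.
   Context: $A$ denotes the Banach space of absolutely continuous functions on $[0,1]$ with norm $\|f\|_A=\|f\|_C+\int_0^1|f'(x)|\,dx$, where $\|f\|_C=\max_{x\in[0,1]}|f(x)|$. An orthonormal system on $[0,1]$ is a sequence of functions orthonormal in $L_2(0,1)$. $\log$ denotes the logarithm (so $\log 1=0$). *)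

(* Defs.v *)
From HB Require Import structures.
From mathcomp Require Import all_boot all_order all_algebra.
From mathcomp Require Import all_classical all_reals all_analysis.
Set Implicit Arguments. Unset Strict Implicit. Unset Printing Implicit Defensive.
Import Order.TTheory GRing.Theory Num.Theory.
Import numFieldNormedType.Exports.
Local Open Scope classical_set_scope.
Local Open Scope ring_scope.

Section Defs.
Variable R : realType.

(* {phi_n}_{n>=1} orthonormal in L_2(0,1) (index 0 is ignored). *)
Definition orthonormal_system (phi : nat -> R -> R) : Prop :=
  (forall n, (0 < n)%N ->
     measurable_fun `[(0%R:R), 1%R] (phi n) /\
     (@lebesgue_measure R).-integrable `[(0%R:R), 1%R] (fun x => (phi n x ^+ 2)%:E)) /\
  (forall m n, (0 < m)%N -> (0 < n)%N ->
     (\int[@lebesgue_measure R]_(x in `[(0%R:R), 1%R]) (phi m x * phi n x)%:E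
      = (if m == n then 1 else 0)%:E)%E).

(* b in l_2 (index 0 ignored, b_0 plays no role anywhere). *)
Definition in_l2 (b : nat -> R) : Prop := cvgn (series (fun n => b n ^+ 2)).

Definition bigO_sqrt_log2 (d : nat -> R) : Prop :=
  exists C : R, exists N : nat, forall n, (N <= n)%N ->
    `|d n| <= C * (Num.sqrt (n%:R) / (ln (n.+1)%:R) ^+ 2).

Definition abs_cont01 (f : R -> R) : Prop :=
  forall eps : R, 0 < eps -> exists2 delta : R, 0 < delta &
    forall (m : nat) (a b : nat -> R),
      (forall k, (k < m)%N -> 0 <= a k /\ a k <= b k /\ b k <= 1) ->
      (forall k l, (k < l < m)%N -> b k <= a l) ->
      \sum_(k < m) (b k - a k) < delta ->
      \sum_(k < m) `|f (b k) - f (a k)| < eps.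

Definition Qn (d b : nat -> R) (phi : nat -> R -> R) (n : nat) (x : R) : R :=
  \sum_(1 <= k < n.+1) d k * b k * ln (k%:R) * phi k x.

(* B_n(d,b) = max_{1 <= i < n} | int_0^{i/n} Q_n | (= 0 when n <= 1) *)
Definition Bn (d b : nat -> R) (phi : nat -> R -> R) (n : nat) : R :=
  \big[Num.max/0]_(1 <= i < n)
     `| Rintegral (@lebesgue_measure R) `[(0%R:R), i%:R / n%:R] (Qn d b phi n) |.

Definition Un (d b : nat -> R) (phi : nat -> R -> R) (f : R -> R) (n : nat) : R :=
  Rintegral (@lebesgue_measure R) `[(0%R:R), 1%R] (fun x => f x * Qn d b phi n x).

End Defs.

(* Main.v *)
Require Import Defs.
From HB Require Import structures.
From mathcomp Require Import all_boot all_order all_algebra.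
From mathcomp Require Import all_classical all_reals all_analysis.
From mathcomp Require Import ring lra.
Import Order.TTheory GRing.Theory Num.Theory.
Import numFieldNormedType.Exports.
Local Open Scope classical_set_scope.
Local Open Scope ring_scope.
Set Implicit Arguments. Unset Strict Implicit. Unset Printing Implicit Defensive.

Section SeqA.
Variable R : realType.

Lemma tail_bound (a : nat -> R) : (forall j, a j.+1 <= a j / 2) ->
  forall N p, \sum_(N <= j < N + p) a j + 2 * a (N + p)%N <= 2 * a N.
Proof.
move=> ha N; elim=> [|p IH]; first by rewrite addn0 big_geq // add0r.
rewrite addnS big_nat_recr /=; last by rewrite leq_addr.
have := ha (N + p); lra.
Qed.

Lemma a_decr (a : nat -> R) : (forall j, 0 < a j) -> (forall j, a j.+1 <= a j / 2) ->
  forall N M, (N <= M)%N -> a M <= a N.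
Proof.
move=> a0 ha N M /subnK <-; elim: (M - N)%N => [|p IH]; first by rewrite add0n.
rewrite addSn; apply: le_trans IH; have := ha (p + N); have := a0 (p + N); lra.
Qed.

Lemma a_small (a : nat -> R) : (forall j, 0 < a j) -> (forall j, a j.+1 <= a j / 2) ->
  forall e, 0 < e -> exists J, forall N, (J <= N)%N -> a N < e.
Proof.
move=> a0 ha e e0.
have key : forall J, a J * J.+1%:R <= a 0%N.
  elim=> [|J IH]; first by rewrite mulr1.
  apply: le_trans IH; have := ha J; have := a0 J; have := a0 J.+1.
  move=> h1 h2 h3.
  have -> : J.+2%:R = J%:R + 2 :> R by rewrite -addn2 natrD.
  have -> : J.+1%:R = J%:R + 1 :> R by rewrite -addn1 natrD.
  have hJ : (0 : R) <= J%:R by [].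
  have : 0 <= (a J / 2 - a J.+1) * (J%:R + 2) by apply: mulr_ge0; lra.
  nra.
exists (Num.truncn (a 0%N / e)) => N hN.
apply: le_lt_trans (a_decr a0 ha hN) _.
have h1 := archimedean.Num.Theory.truncnS_gt (a 0%N / e).
have h2 := key (Num.truncn (a 0%N / e)).
have h3 := a0 (Num.truncn (a 0%N / e)).
set T := (Num.truncn (a 0%N / e)).+1%:R in h1 h2.
rewrite ltr_pdivrMr // in h1.
have hT : 0 < T by rewrite /T ltr0Sn.
nra.
Qed.

Variables (a : nat -> R) (v : nat -> R).
Hypothesis a0 : forall j, 0 < a j.
Hypothesis ha : forall j, a j.+1 <= a j / 2.
Hypothesis va : forall j, `|v j| <= a j.

Let S N := \sum_(0 <= j < N) v j.

Lemma partial_diff N M : (N <= M)%N -> `|S M - S N| <= 2 * a N - 2 * a M.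
Proof.
move=> /subnK <-; rewrite addnC /S (big_cat_nat (leq0n N) (leq_addr _ _)) /=.
rewrite addrAC subrr add0r.
have := tail_bound ha N (M - N); set s := \sum_(_ <= _ < _) a _ => h.
suff : `|\sum_(N <= j < N + (M - N)) v j| <= s by lra.
apply: le_trans (ler_norm_sum _ _ _) _; apply: ler_sum => j _; exact: va.
Qed.

Lemma partial_cvg : cvgn S.
Proof.
have eq : S = (fun N => \sum_(0 <= j < N) (v j + a j) - \sum_(0 <= j < N) a j).
  by apply/funext => N; rewrite /S big_split /= addrK.
rewrite eq; apply: is_cvgB.
  apply: nondecreasing_is_cvgn.
    move=> m n mn; rewrite (big_cat_nat (leq0n m) mn) /= lerDl.
    apply: sumr_ge0 => j _; have := va j; rewrite ler_norml; lra.
  exists (4 * a 0%N) => _ [N _ <-].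
  apply: (@le_trans _ _ (\sum_(0 <= j < N) (2 * a j))).
    apply: ler_sum => j _; have := va j; rewrite ler_norml; lra.
  rewrite -mulr_sumr; have := tail_bound ha 0 N; rewrite add0n.
  have := a0 N; lra.
apply: nondecreasing_is_cvgn.
  move=> m n mn; rewrite (big_cat_nat (leq0n m) mn) /= lerDl.
  by apply: sumr_ge0 => j _; apply: ltW.
exists (2 * a 0%N) => _ [N _ <-].
have := tail_bound ha 0 N; rewrite add0n; have := a0 N; lra.
Qed.

Lemma partial_lim N : `|limn S - S N| <= 2 * a N.
Proof.
rewrite ler_norml; apply/andP; split.
  rewrite lerBrDr; apply: limr_ge; first exact: partial_cvg.
  near=> M; have hM : (N <= M)%N by near: M; exact: nbhs_infty_ge.
  have := partial_diff hM; rewrite ler_norml => /andP[h1 h2]; have := a0 M; lra.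
rewrite lerBlDr; apply: limr_le; first exact: partial_cvg.
near=> M; have hM : (N <= M)%N by near: M; exact: nbhs_infty_ge.
have := partial_diff hM; rewrite ler_norml => /andP[h1 h2]; have := a0 M; lra.
Unshelve. all: by end_near.
Qed.

End SeqA.

Section AC.
Variable R : realType.

Lemma ac_add (f h : R -> R) : abs_cont01 f -> abs_cont01 h ->
  abs_cont01 (fun x => f x + h x).
Proof.
move=> Hf Hh eps e0.
have e2 : 0 < eps / 2 by lra.
have [d1 d10 H1] := Hf _ e2; have [d2 d20 H2] := Hh _ e2.
exists (Num.min d1 d2); first by rewrite lt_min d10 d20.
move=> m a b hab hord hs.
have hs1 : \sum_(k < m) (b k - a k) < d1 by apply: lt_le_trans hs _; rewrite ge_min lexx.
have hs2 : \sum_(k < m) (b k - a k) < d2 by apply: lt_le_trans hs _; rewrite ge_min lexx orbT.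
have := H1 m a b hab hord hs1; have := H2 m a b hab hord hs2.
move=> g2 g1.
apply: (@le_lt_trans _ _ (\sum_(k < m) `|f (b k) - f (a k)| + \sum_(k < m) `|h (b k) - h (a k)|)); last by lra.
rewrite -big_split /=; apply: ler_sum => k _.
rewrite (_ : f (b k) + h (b k) - (f (a k) + h (a k)) = (f (b k) - f (a k)) + (h (b k) - h (a k))); last by lra.
exact: ler_normD.
Qed.

Lemma ac0 : abs_cont01 (fun _ : R => 0).
Proof.
move=> eps e0; exists 1 => // m a b _ _ _.
rewrite big1 // => k _; rewrite subrr normr0 //.
Qed.

Lemma ac_sum (u : nat -> R -> R) : (forall j, abs_cont01 (u j)) ->
  forall J, abs_cont01 (fun x => \sum_(0 <= j < J) u j x).
Proof.
move=> Hu; elim=> [|J IH].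
  have -> : (fun x : R => \sum_(0 <= j < 0) u j x) = (fun _ => 0).
    by apply/funext => x; rewrite big_geq.
  exact: ac0.
have -> : (fun x : R => \sum_(0 <= j < J.+1) u j x) = (fun x => \sum_(0 <= j < J) u j x + u J x).
  by apply/funext => x; rewrite big_nat_recr.
exact: ac_add.
Qed.

Lemma ac_lip (f : R -> R) (L : R) : 0 <= L ->
  (forall x y, `|f x - f y| <= L * `|x - y|) -> abs_cont01 f.
Proof.
move=> L0 Hf eps e0; exists (eps / (L + 1)); first by apply: divr_gt0 => //; lra.
move=> m a b hab _ hs.
apply: (@le_lt_trans _ _ (L * \sum_(k < m) (b k - a k))).
  rewrite mulr_sumr; apply: ler_sum => k _.
  have [_ [hk _]] := hab k (ltn_ord k).
  by rewrite (le_trans (Hf _ _)) // ger0_norm // subr_ge0.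
have hL : 0 < L + 1 by lra.
have : L * \sum_(k < m) (b k - a k) <= L * (eps / (L + 1)).
  by apply: ler_wpM2l => //; apply: ltW.
suff : L * (eps / (L + 1)) < eps by lra.
rewrite mulrA ltr_pdivrMr // mulrC ltr_pM2l //; lra.
Qed.

Lemma var_mono (r : R -> R) : (forall x y, x <= y -> r y <= r x) ->
  (forall x, 0 <= r x <= 1) ->
  forall m (a b : nat -> R),
  (forall k, (k < m)%N -> 0 <= a k /\ a k <= b k /\ b k <= 1) ->
  (forall k l, (k < l < m)%N -> b k <= a l) ->
  \sum_(k < m) `|r (b k) - r (a k)| <= 1.
Proof.
move=> rmono r01; case=> [|m] a b hab hord; first by rewrite big_ord0.
suff : \sum_(k < m.+1) `|r (b k) - r (a k)| <= 1 - r (b m) by case/andP: (r01 (b m)); lra.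
elim: m hab hord => [|m IH] hab hord.
  rewrite big_ord1; have [_ [h _]] := hab 0%N isT.
  have h1 := rmono _ _ h; case/andP: (r01 (a 0%N)) => h2 h3.
  by rewrite ler0_norm; lra.
rewrite big_ord_recr /=.
have h1 : \sum_(k < m.+1) `|r (b k) - r (a k)| <= 1 - r (b m).
  apply: IH => [k hk|k l hkl]; first by apply: hab; apply: ltn_trans hk _.
  by apply: hord; case/andP: hkl => -> /= h; apply: ltn_trans h _.
have [_ [h2 _]] := hab m.+1 (ltnSn _).
have h3 : b m <= a m.+1 by apply: hord; rewrite ltnSn ltnSn.
have h4 := rmono _ _ h2; have h5 := rmono _ _ h3.
rewrite ler0_norm; lra.
Qed.

Variables (u : nat -> R -> R) (a : nat -> R).
Hypothesis a0 : forall j, 0 < a j.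
Hypothesis ha : forall j, a j.+1 <= a j / 2.
Hypothesis ua : forall j x, `|u j x| <= a j.
Hypothesis uac : forall j, abs_cont01 (u j).
Hypothesis uvar : forall j m (al be : nat -> R),
  (forall k, (k < m)%N -> 0 <= al k /\ al k <= be k /\ be k <= 1) ->
  (forall k l, (k < l < m)%N -> be k <= al l) ->
  \sum_(k < m) `|u j (be k) - u j (al k)| <= a j.

Let S N x := \sum_(0 <= j < N) u j x.
Let g x := limn (fun N => S N x).

Lemma g_close N x : `|g x - S N x| <= 2 * a N.
Proof. exact: (@partial_lim R a (fun j => u j x) a0 ha (fun j => ua j x)). Qed.

Lemma ac_series : abs_cont01 g.
Proof.
move=> eps e0.
have e8 : 0 < eps / 8 by lra.
have [J HJ] := a_small a0 ha e8.
have e2 : 0 < eps / 2 by lra.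
have [del del0 Hd] := ac_sum uac J e2.
exists del => // m al be hab hord hs.
have HSJ := Hd m al be hab hord hs.
have em : 0 < eps / (16 * (m%:R + 1)) by apply: divr_gt0 => //; have : (0:R) <= m%:R by []; lra.
have [N0 HN0] := a_small a0 ha em.
pose N := maxn J N0.
have JN : (J <= N)%N by rewrite leq_maxl.
have aN : a N < eps / (16 * (m%:R + 1)) by apply: HN0; rewrite leq_maxr.
have aJ : a J < eps / 8 by apply: HJ.
set T := fun k : 'I_m => (g (be k) - S J (be k)) - (g (al k) - S J (al k)).
have step1 : \sum_(k < m) `|g (be k) - g (al k)| <=
   \sum_(k < m) `|S J (be k) - S J (al k)| + \sum_(k < m) `|T k|.
  rewrite -big_split /=; apply: ler_sum => k _.
  rewrite (_ : g (be k) - g (al k) = (S J (be k) - S J (al k)) + T k); last by rewrite /T; lra.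
  exact: ler_normD.
have SNJ x : S N x - S J x = \sum_(J <= j < N) u j x.
  by rewrite /S (big_cat_nat (leq0n J) JN) /= addrAC subrr add0r.
have step2 : \sum_(k < m) `|T k| <= \sum_(k < m) (\sum_(J <= j < N) `|u j (be k) - u j (al k)| + 4 * a N).
  apply: ler_sum => k _.
  rewrite (_ : T k = (\sum_(J <= j < N) (u j (be k) - u j (al k))) + ((g (be k) - S N (be k)) - (g (al k) - S N (al k)))); last first.
    by rewrite sumrB -!SNJ /T; lra.
  apply: le_trans (ler_normD _ _) _; apply: lerD; first exact: ler_norm_sum.
  apply: le_trans (ler_normB _ _) _.
  have := g_close N (be k); have := g_close N (al k); lra.
have step3 : \sum_(k < m) (\sum_(J <= j < N) `|u j (be k) - u j (al k)| + 4 * a N)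
    <= 2 * a J + m%:R * (4 * a N).
  rewrite big_split /= exchange_big /= sumr_const card_ord -[_ *+ m]mulr_natl.
  apply: lerD => //.
  apply: (@le_trans _ _ (\sum_(J <= j < N) a j)).
    by apply: ler_sum => j _; apply: uvar.
  have := tail_bound ha J (N - J); rewrite subnKC //; have := a0 N; lra.
have step4 : m%:R * (4 * a N) <= eps / 4.
  have hm : (0:R) <= m%:R by [].
  have : m%:R * (4 * a N) <= m%:R * (4 * (eps / (16 * (m%:R + 1)))).
    by apply: ler_wpM2l => //; have := a0 N; lra.
  suff : m%:R * (4 * (eps / (16 * (m%:R + 1)))) <= eps / 4 by lra.
  rewrite (_ : m%:R * (4 * (eps / (16 * (m%:R + 1)))) = (eps / 4) * (m%:R / (m%:R + 1))); last first.
    by field; lra.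
  rewrite -[X in _ <= X]mulr1; apply: ler_wpM2l; first lra.
  by rewrite ler_pdivrMr; lra.
lra.
Qed.

End AC.

Section LS.
Variable R : realType.

Lemma esup_oo_ex (u : nat -> R) : limn_esup (fun n => (u n)%:E) = +oo%E ->
  forall N (M : R), exists n, (N <= n)%N /\ M < u n.
Proof.
rewrite limn_esup_lim => h N M.
have h2 : limn (esups (fun n => (u n)%:E)) = ereal_inf (range (esups (fun n => (u n)%:E))).
  by apply/cvg_lim => //; exact: cvg_esups_inf.
rewrite h2 in h.
have h3 : esups (fun n => (u n)%:E) N = +oo%E.
  apply/eqP; rewrite eq_le leey /= -h; apply: ereal_inf_lbound; by exists N.
have : (M%:E < esups (fun n => (u n)%:E) N)%E by rewrite h3 ltey.
move/ereal_sup_gt => [_ [n /= hn <-]] hM; exists n; split => //.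
Qed.

Lemma esup_oo_intro (u : nat -> R) :
  (forall N (M : R), exists n, (N <= n)%N /\ M < u n) ->
  limn_esup (fun n => (u n)%:E) = +oo%E.
Proof.
move=> h; rewrite limn_esup_lim.
have -> : esups (fun n => (u n)%:E) = fun _ => +oo%E.
  apply/funext => N; apply/eqP; rewrite eq_le leey /=.
  case E : (esups (fun n => (u n)%:E) N) => [r| |] //.
    have [n [hn hr]] := h N (r + 1).
    have : ((u n)%:E <= esups (fun n => (u n)%:E) N)%E.
      by apply: ereal_sup_ubound; exists n.
    by rewrite E lee_fin => hh; exfalso; move: hr hh; clear E h; lra.
  have [n [hn hr]] := h N 0.
  have : ((u n)%:E <= esups (fun n => (u n)%:E) N)%E.
    by apply: ereal_sup_ubound; exists n.
  by rewrite E.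
exact: lim_cst.
Qed.

Lemma bigmax_attain (f : nat -> R) (s : seq nat) : (forall i, 0 <= f i) ->
  \big[Num.max/0]_(i <- s) f i = 0 \/
  exists2 i, i \in s & \big[Num.max/0]_(i <- s) f i = f i.
Proof.
move=> f0; elim: s => [|i s IH]; first by left; rewrite big_nil.
rewrite big_cons; case: IH => [->|[j js ->]].
  by right; exists i; rewrite ?mem_head // max_l.
right; case: (leP (f i) (f j)) => h.
  by exists j; rewrite ?inE ?js ?orbT // max_r.
by exists i; rewrite ?mem_head // max_l // ltW.
Qed.

End LS.

Section Int.
Variable R : realType.
Local Notation mu := (@lebesgue_measure R).
Local Notation I := (`[(0:R), 1]%classic : set R).

Lemma mI : measurable I. Proof. exact: measurable_itv. Qed.

Lemma muI : (mu I < +oo)%E.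
Proof. by rewrite lebesgue_measure_itv /=; case: ifP => _ //; rewrite oppr0 adde0 ltry. Qed.

Lemma bm_int (f : R -> R) : measurable_fun I f -> (exists C, forall x, I x -> `|f x| <= C) ->
  mu.-integrable I (EFin \o f).
Proof.
move=> mf [C hC]; apply: (@measurable_bounded_integrable _ _ _ mu f I mI muI mf).
exists C; split; first by rewrite num_real.
move=> M hM x Ix; apply: le_trans (hC x Ix) _; exact: ltW.
Qed.

Variable phi : nat -> R -> R.
Hypothesis Hphi : orthonormal_system phi.

Lemma phi_int k : (0 < k)%N -> mu.-integrable I (EFin \o phi k).
Proof.
move=> k0; have [[mphi iphi] _] := (Hphi.1 k k0, Hphi.2).
apply: (@le_integrable _ _ _ mu I mI _ (EFin \o (fun x => 1 + phi k x ^+ 2))).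
- exact/measurable_realfun.measurable_EFinP.
- move=> x Ix /=; rewrite lee_fin [X in _ <= X]ger0_norm; last first.
    by have := sqr_ge0 (phi k x); lra.
  have h1 : `|phi k x| <= 1 + `|phi k x| ^+ 2.
    have := normr_ge0 (phi k x); set y := `|phi k x|; nra.
  by rewrite real_normK ?num_real // in h1.
- have hc : mu.-integrable I (EFin \o cst (1:R)).
    apply: (@bm_int (cst 1)); first exact: measurable_cst.
    by exists 1 => x _; rewrite normr1.
  pose f1 : R -> \bar R := EFin \o cst (1:R); pose f2 := fun x => (phi k x ^+ 2)%:E.
  apply: (@eq_integrable _ _ _ mu I mI (f1 \+ f2)%E).
    by move=> x _; rewrite /f1 /f2 /= EFinD.
  exact: (@integrableD _ _ _ mu I mI _ _ hc iphi).
Qed.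

Variables d b : nat -> R.

Lemma Q_int n : mu.-integrable I (EFin \o Qn d b phi n).
Proof.
elim: n => [|n IH].
  apply: (@eq_integrable _ _ _ mu I mI (cst 0%E)).
    by move=> x _; rewrite /Qn /= big_geq.
  exact: integrable0.
pose f1 := EFin \o Qn d b phi n.
pose f2 := fun x => ((d n.+1 * b n.+1 * ln n.+1%:R)%:E * (phi n.+1 x)%:E)%E.
apply: (@eq_integrable _ _ _ mu I mI (f1 \+ f2)%E).
  by move=> x _; rewrite /f1 /f2 /Qn /= [in RHS]big_nat_recr //= EFinD EFinM.
apply: (@integrableD _ _ _ mu I mI) => //.
by apply: (@integrableZl _ _ _ mu I mI); exact: phi_int.
Qed.


Definition bm (f : R -> R) := measurable_fun I f /\ exists C, forall x, I x -> `|f x| <= C.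

Lemma bm_bounded f : bm f -> [bounded f x | x in I].
Proof.
move=> [_ [C hC]]; exists C; split; first by rewrite num_real.
move=> M hM x Ix; apply: le_trans (hC x Ix) _; exact: ltW.
Qed.

Local Notation Q n := (Qn d b phi n).

Lemma bmQ_int f n : bm f -> mu.-integrable I (EFin \o (fun x => f x * Q n x)).
Proof.
move=> hf.
have := @integrableMr _ _ _ mu I mI f (EFin \o Q n) hf.1 (bm_bounded hf) (Q_int n).
apply: (@eq_integrable _ _ _ mu I mI) => x _; by rewrite /= EFinM.
Qed.

Lemma Un_add f h n : bm f -> bm h ->
  Un d b phi (fun x => f x + h x) n = Un d b phi f n + Un d b phi h n.
Proof.
move=> hf hh; rewrite /Un.
rewrite (@eq_Rintegral _ _ _ mu I (fun x => f x * Q n x + h x * Q n x)); last first.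
  by move=> x _; rewrite mulrDl.
exact: (@RintegralD _ _ _ mu I _ _ mI (bmQ_int n hf) (bmQ_int n hh)).
Qed.

Lemma Un_scale c f n : bm f -> Un d b phi (fun x => c * f x) n = c * Un d b phi f n.
Proof.
move=> hf; rewrite /Un.
rewrite (@eq_Rintegral _ _ _ mu I (fun x => c * (f x * Q n x))); last first.
  by move=> x _; rewrite mulrA.
exact: (@RintegralZl _ _ _ mu I _ c mI (bmQ_int n hf)).
Qed.

Definition L n := Rintegral mu I (fun x => `|Q n x|).

Lemma Un_bound f n C : bm f -> (forall x, I x -> `|f x| <= C) ->
  `|Un d b phi f n| <= C * L n.
Proof.
move=> hf hC; rewrite /Un /L.
apply: le_trans (@le_normr_Rintegral _ _ _ mu I _ mI (bmQ_int n hf)) _.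
have iQ := @integrable_norm _ _ _ mu I _ (Q_int n).
rewrite -(@RintegralZl _ _ _ mu I _ C mI iQ).
apply: (@le_Rintegral _ _ _ mu I _ _ mI).
- exact: (@integrable_norm _ _ _ mu I _ (bmQ_int n hf)).
- exact: (@integrableZl _ _ _ mu I mI C _ iQ).
- move=> x Ix; rewrite normrM; apply: ler_wpM2r => //; exact: hC.
Qed.

Lemma bm_add f h : bm f -> bm h -> bm (fun x => f x + h x).
Proof.
move=> [mf [C1 h1]] [mh [C2 h2]]; split; first exact: measurable_realfun.measurable_funD.
exists (C1 + C2) => x Ix; apply: le_trans (ler_normD _ _) _; apply: lerD; [exact: h1|exact: h2].
Qed.

Lemma bm_scale c f : bm f -> bm (fun x => c * f x).
Proof.
move=> [mf [C1 h1]]; split; first exact: measurable_realfun.measurable_funM.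
exists (`|c| * C1) => x Ix; rewrite normrM; apply: ler_wpM2l => //; exact: h1.
Qed.

Lemma bm0 : bm (fun _ => 0).
Proof. by split; [exact: measurable_cst| exists 0 => x _; rewrite normr0]. Qed.


Definition clamp (u : R) := Num.min 1 (Num.max 0 u).

Lemma clampE u : clamp u = if u <= 0 then 0 else if u <= 1 then u else 1.
Proof.
rewrite /clamp; case: (leP u 0) => hu /=.
  by case: (leP 1 0) => h //; lra.
by case: (leP u 1) => h.
Qed.

Lemma clamp01 u : 0 <= clamp u <= 1.
Proof. by rewrite clampE; case: (leP u 0) => h; case: (leP u 1) => h'; apply/andP; split; lra. Qed.

Lemma clamp_lip u v : `|clamp u - clamp v| <= `|u - v|.
Proof.
have h1 := ler_norm (u - v); have h2 := ler_norm (v - u); rewrite distrC in h2.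
rewrite !clampE ler_norml.
case: (leP u 0) => a1; case: (leP u 1) => a2; case: (leP v 0) => a3; case: (leP v 1) => a4;
  apply/andP; split; lra.
Qed.

Lemma clamp_mono u v : u <= v -> clamp u <= clamp v.
Proof.
move=> uv; rewrite !clampE.
by case: (leP u 0) => a1; case: (leP u 1) => a2; case: (leP v 0) => a3; case: (leP v 1) => a4; lra.
Qed.

Definition ramp (t c x : R) : R := clamp (1 - (x - t) * c).

Lemma ramp01 t c x : 0 <= ramp t c x <= 1.
Proof. exact: clamp01. Qed.

Lemma ramp_lip t c x y : 0 <= c -> `|ramp t c x - ramp t c y| <= c * `|x - y|.
Proof.
move=> c0; apply: le_trans (clamp_lip _ _) _.
rewrite (_ : 1 - (x - t) * c - (1 - (y - t) * c) = - ((x - y) * c)); last by ring.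
by rewrite normrN normrM (ger0_norm c0) mulrC.
Qed.

Lemma ramp_mono t c x y : 0 <= c -> x <= y -> ramp t c y <= ramp t c x.
Proof.
move=> c0 xy; apply: clamp_mono.
have : (x - t) * c <= (y - t) * c by apply: ler_wpM2r => //; lra.
lra.
Qed.

Lemma ramp_meas t c : measurable_fun I (ramp t c).
Proof.
rewrite /ramp /clamp.
apply: measurable_realfun.measurable_minr; first exact: measurable_cst.
apply: measurable_realfun.measurable_maxr; first exact: measurable_cst.
apply: measurable_realfun.measurable_funB; first exact: measurable_cst.
apply: measurable_realfun.measurable_funM; last exact: measurable_cst.
apply: measurable_realfun.measurable_funB; first exact: measurable_id.
exact: measurable_cst.
Qed.

Lemma bm_ramp t c : bm (ramp t c).
Proof.
split; first exact: ramp_meas.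
exists 1 => x _; case/andP: (ramp01 t c x) => h1 h2; rewrite ger0_norm //.
Qed.


Lemma Q_meas n : measurable_fun I (Q n).
Proof. have h := measurable_int mu (Q_int n). by apply/measurable_realfun.measurable_EFinP. Qed.

Lemma ramp_approx (n : nat) (t eta : R) : 0 <= t <= 1 -> 0 < eta ->
  exists c, 0 < c /\ `|Un d b phi (ramp t c) n - Rintegral mu `[0, t] (Q n)| < eta.
Proof.
move=> /andP[t0 t1] eta0.
pose f_ : nat -> R -> \bar R := fun (m : nat) (x : R) => ((ramp t (m.+1%:R) x * Q n x)%:E).
pose f : R -> \bar R := fun x : R => (((Q n) \_ `[0, t]) x)%:E.
pose g : R -> \bar R := fun x : R => (`|Q n x|)%:E.
have H : (\int[mu]_(x in I) f_ m x)%E @[m --> \oo] --> (\int[mu]_(x in I) f x)%E.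
  apply: (@dominated_cvg _ _ _ mu I mI f_ f g).
  - move=> m; apply/measurable_realfun.measurable_EFinP.
    apply: measurable_realfun.measurable_funM; [exact: ramp_meas|exact: Q_meas].
  - move=> x; rewrite /= in_itv /= => /andP[x0 x1].
    apply: cvg_near_cst.
    case: (leP x t) => hxt.
      near=> m; rewrite /f_ /f patchE.
      rewrite ifT; last by apply/mem_set; rewrite /= in_itv /= x0 hxt.
      rewrite /ramp clampE.
      have : (x - t) * m.+1%:R <= 0 by apply: mulr_le0_ge0 => //; lra.
      move=> hh.
      case: (leP (1 - (x - t) * m.+1%:R) 0) => h1; first (exfalso; lra).
      case: (leP (1 - (x - t) * m.+1%:R) 1) => h2; last by rewrite mul1r.
      have -> : 1 - (x - t) * m.+1%:R = 1 by lra.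
      by rewrite mul1r.
    near=> m; rewrite /f_ /f patchE.
    rewrite ifF; last first.
      by apply/negbTE/negP => /set_mem; rewrite /= in_itv /= x0 /= => hh; lra.
    suff -> : ramp t m.+1%:R x = 0 by rewrite mul0r.
    rewrite /ramp clampE.
    suff -> : 1 - (x - t) * m.+1%:R <= 0 by [].
    near: m.
    exists (Num.truncn ((x - t)^-1)) => // m /= hm.
    have h1 := archimedean.Num.Theory.truncnS_gt ((x - t)^-1).
    have hxt0 : 0 < x - t by lra.
    have h2 : ((Num.truncn ((x - t)^-1)).+1%:R : R) <= m.+1%:R by rewrite ler_nat.
    have h3 : (x - t)^-1 < m.+1%:R by apply: lt_le_trans h1 h2.
    have h4 : (x - t) * (x - t)^-1 < (x - t) * m.+1%:R by rewrite ltr_pM2l.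
    rewrite divff in h4; last by lra.
    lra.
  - by [].
  - exact: (@integrable_norm _ _ _ mu I _ (Q_int n)).
  - move=> m x Ix; rewrite /f_ /g lee_fin normrM.
    rewrite -[X in _ <= X]mul1r; apply: ler_wpM2r => //.
    by case/andP: (ramp01 t m.+1%:R x) => h1 h2; rewrite ger0_norm.
pose It : set R := `[0, t]%classic.
have mt : measurable It by exact: measurable_itv.
have sub : It = I `&` It.
  apply/seteqP; split => x; rewrite /It /= !in_itv /=.
    by move=> /andP[x0 xt]; split; apply/andP; split => //; lra.
  by case.
have E1 : (\int[mu]_(x in I) f x)%E = (\int[mu]_(x in It) (Q n x)%:E)%E.
  rewrite sub integral_mkcondr; apply: eq_integral => x _.
  by rewrite /f !patchE; case: ifP.
have iQt : mu.-integrable It (EFin \o Q n).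
  apply: (@integrableS _ _ _ mu I It _ mI mt) => //; last exact: Q_int.
  by rewrite sub; apply: subIsetl.
have fin := @integrable_fin_num _ _ _ mu It mt _ iQt.
rewrite E1 -(fineK fin) in H.
move/fine_cvgP: H => [_ H2].
have := (cvgrPdist_lt _ _).1 H2 eta eta0.
case=> N _ HN; have := HN N (leqnn N).
move=> hN; exists N.+1%:R; split; first exact: ltr0Sn.
by rewrite distrC.
Unshelve. all: by end_near.
Qed.

End Int.

Lemma absD_ge (R : realType) (x y : R) : 0 <= x * y -> `|y| <= `|x + y|.
Proof.
move=> h; rewrite -(@ler_pXn2r _ 2) ?nnegrE ?normr_ge0 //.
rewrite !real_normK ?num_real //; nra.
Qed.

Section Constr.
Variable R : realType.
Variables (phi : nat -> R -> R) (d b : nat -> R).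
Hypothesis Hphi : orthonormal_system phi.
Hypothesis HB : forall N (M : R), exists n, (N <= n)%N /\ M < Bn d b phi n.

Local Notation U f n := (Un d b phi f n).

Definition good (k : nat) (S : R -> R) (a : R) (h : nat * R * R * R) :=
  [/\ (k <= h.1.1.1)%N, 0 < h.1.2, (h.2 = 1 \/ h.2 = -1) &
      k.+2%:R <= `|U S h.1.1.1 + a * h.2 * U (ramp h.1.1.2 h.1.2) h.1.1.1|].

Lemma exists_next k S a : exists h, 0 < a -> good k S a h.
Proof.
case: (ltP 0 a) => a0; last by exists (0%N, 0, 0, 0) => h; exfalso; lra.
have [n [kn hn]] := HB k (k.+3%:R / a).
have hpos : 0 < k.+3%:R / a by apply: divr_gt0.
have F0 : forall i, 0 <= `| Rintegral (@lebesgue_measure R) `[(0%R:R), i%:R / n%:R] (Qn d b phi n) | by move=> i.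
case: (bigmax_attain (index_iota 1 n) F0) => [E|[i hi E]].
  by exfalso; move: hn; rewrite /Bn E; lra.
rewrite mem_index_iota in hi; case/andP: hi => i1 i2.
pose t := i%:R / n%:R : R.
have n0 : (0 : R) < n%:R by rewrite ltr0n; apply: leq_ltn_trans i2; apply: leq0n.
have t01 : 0 <= t <= 1.
  apply/andP; split; first by apply: divr_ge0.
  by rewrite /t ler_pdivrMr // mul1r ler_nat ltnW.
have ia : 0 < a^-1 by rewrite invr_gt0.
have [c [c0 hc]] := ramp_approx Hphi d b n t01 ia.
pose Ur := U (ramp t c) n.
pose s : R := if 0 <= U S n * Ur then 1 else -1.
exists (n, t, c, s) => _; split => //=.
  by rewrite /s; case: ifP; [left|right].
have hUr : k.+2%:R / a < `|Ur|.
  set F := Rintegral (@lebesgue_measure R) `[(0%R:R), t] (Qn d b phi n).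
  have e1 : Bn d b phi n = `|F| by rewrite /Bn E.
  have h1 := ler_normD (F - Ur) Ur; rewrite subrK distrC in h1.
  have e2 : k.+3%:R / a = k.+2%:R / a + a^-1.
    by rewrite -addn1 natrD mulrDl mul1r.
  rewrite e1 e2 in hn; rewrite /Ur; lra.
have hs : `|s| = 1 by rewrite /s; case: ifP => _; rewrite ?normrN normr1.
have hxy : 0 <= U S n * (a * s * Ur).
  have -> : U S n * (a * s * Ur) = a * (s * (U S n * Ur)) by rewrite /Ur; ring.
  apply: mulr_ge0; first exact: ltW.
  rewrite /s; case: ifP => h; first by rewrite mul1r.
  by rewrite mulN1r oppr_ge0 ltW // ltNge h.
apply: le_trans (absD_ge hxy); rewrite !normrM hs mulr1 (gtr0_norm a0).
rewrite ltr_pdivrMr // mulrC in hUr; exact: ltW.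
Qed.


Definition nxt k S a : nat * R * R * R := projT1 (cid (exists_next k S a)).
Lemma nxtP k S a : 0 < a -> good k S a (nxt k S a).
Proof. exact: (projT2 (cid (exists_next k S a))). Qed.

Fixpoint st (k : nat) : (R -> R) * R :=
  match k with
  | 0%N => (fun _ => 0, 1)
  | k'.+1 => let s := st k' in let h := nxt k' s.1 s.2 in
     (fun x => s.1 x + s.2 * h.2 * ramp h.1.1.2 h.1.2 x,
      s.2 / (2 * (1 + `|L phi d b h.1.1.1|)))
  end.

Definition A k := (st k).2.
Definition hm k := nxt k (st k).1 (A k).
Definition uu j x := A j * (hm j).2 * ramp (hm j).1.1.2 (hm j).1.2 x.
Definition NN k := (hm k).1.1.1.

Lemma A_S k : A k.+1 = A k / (2 * (1 + `|L phi d b (NN k)|)).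
Proof. by []. Qed.

Lemma A_pos k : 0 < A k.
Proof.
elim: k => [|k IH]; first by rewrite /A /= ltr01.
rewrite A_S; apply: divr_gt0 => //; have := normr_ge0 (L phi d b (NN k)); lra.
Qed.

Lemma A_mul k : A k.+1 * (2 * (1 + `|L phi d b (NN k)|)) = A k.
Proof. rewrite A_S mulfVK //; have := normr_ge0 (L phi d b (NN k)); lra. Qed.

Lemma A_half k : A k.+1 <= A k / 2.
Proof.
have := A_mul k; have := A_pos k.+1; have := normr_ge0 (L phi d b (NN k)).
set l := `|_|; set a1 := A k.+1; move=> l0 a10 e.
have : 0 <= a1 * l by apply: mulr_ge0 => //; lra.
lra.
Qed.

Lemma A_L k : 2 * A k.+1 * L phi d b (NN k) <= A k.
Proof.
have := A_mul k; have := A_pos k.+1; have := ler_norm (L phi d b (NN k)).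
set l := L _ _ _ _; set a1 := A k.+1; move=> hl a10 e.
have : a1 * l <= a1 * `|l| by apply: ler_wpM2l => //; lra.
lra.
Qed.

Lemma A_le1 k : A k <= 1.
Proof.
elim: k => [|k IH]; first by rewrite /A.
have := A_half k; have := A_pos k; lra.
Qed.

Lemma S_eq k : (st k).1 = fun x => \sum_(0 <= j < k) uu j x.
Proof.
elim: k => [|k IH]; first by apply/funext => x; rewrite big_geq.
apply/funext => x; rewrite big_nat_recr //=.
by rewrite {1}IH.
Qed.

Lemma hm_good k : good k (st k).1 (A k) (hm k).
Proof. exact: nxtP (A_pos k). Qed.

End Constr.

Unset Implicit Arguments.

Theorem theorem2 (R : realType) (phi : nat -> R -> R) (d : nat -> R) :
  orthonormal_system phi ->
  bigO_sqrt_log2 d ->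
  forall b : nat -> R, in_l2 b ->
  limn_esup (fun n => (Bn d b phi n)%:E) = +oo%E ->
  exists g : R -> R, abs_cont01 g /\
    limn_esup (fun n => (`| Un d b phi g n |)%:E) = +oo%E.
Proof.
move=> Hphi _ b _ HBoo.
have HB := esup_oo_ex HBoo.
pose u := uu Hphi HB.
pose a := A Hphi HB.
have a0 : forall j, 0 < a j by exact: A_pos.
have ha : forall j, a j.+1 <= a j / 2 by exact: A_half.
have hsig : forall j, `|(hm Hphi HB j).2| = 1.
  by move=> j; case: (hm_good Hphi HB j) => _ _ [->|->] _; rewrite ?normrN normr1.
have hc0 : forall j, 0 < (hm Hphi HB j).1.2.
  by move=> j; case: (hm_good Hphi HB j).
have ua : forall j x, `|u j x| <= a j.
  move=> j x; rewrite /u /uu !normrM hsig mulr1 (gtr0_norm (a0 j)).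
  rewrite -[X in _ <= X]mulr1; apply: ler_wpM2l; first exact: ltW.
  by case/andP: (ramp01 (hm Hphi HB j).1.1.2 (hm Hphi HB j).1.2 x) => h1 h2; rewrite ger0_norm.
have udiff : forall j x y, `|u j x - u j y| = a j * `|ramp (hm Hphi HB j).1.1.2 (hm Hphi HB j).1.2 x - ramp (hm Hphi HB j).1.1.2 (hm Hphi HB j).1.2 y|.
  move=> j x y; rewrite /u /uu -mulrBr normrM normrM hsig mulr1 (gtr0_norm (a0 j)) //.
pose g := fun x => limn (fun N => \sum_(0 <= j < N) u j x).
exists g; split.
  apply: (@ac_series R u a a0 ha ua).
  - move=> j; apply: (@ac_lip _ _ (a j * (hm Hphi HB j).1.2)).
      by apply: mulr_ge0; apply: ltW.
    move=> x y; rewrite udiff -mulrA; apply: ler_wpM2l; first exact: ltW.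
    by apply: ramp_lip; apply: ltW.
  - move=> j m al be h1 h2.
    under eq_bigr do rewrite udiff.
    rewrite -mulr_sumr -[X in _ <= X]mulr1; apply: ler_wpM2l; first exact: ltW.
    apply: var_mono => //.
    + by move=> x y xy; apply: ramp_mono => //; apply: ltW.
    + exact: ramp01.
pose PS := fun N x => \sum_(0 <= j < N) u j x.
have bmu : forall j, bm (u j).
  move=> j; exact: (bm_scale (A Hphi HB j * (hm Hphi HB j).2) (bm_ramp _ _)).
have bmS : forall N, bm (PS N).
  elim=> [|N IH].
    have -> : PS 0%N = (fun _ => 0) by apply/funext => x; rewrite /PS big_geq.
    exact: bm0.
  have -> : PS N.+1 = (fun x => PS N x + u N x).
    by apply/funext => x; rewrite /PS big_nat_recr.
  exact: bm_add.
have gclose : forall N x, `|g x - PS N x| <= 2 * a N.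
  by move=> N x; exact: (@partial_lim R a (fun j => u j x) a0 ha (fun j => ua j x) N).
have bmg : bm g.
  split.
    apply: (@measurable_realfun.measurable_fun_cvg _ _ _ _ PS).
      by move=> N; exact: (bmS N).1.
    move=> x _; exact: (@partial_cvg R a (fun j => u j x) a0 ha (fun j => ua j x)).
  exists 2 => x _.
  have := gclose 0%N x; rewrite /PS big_geq // subr0.
  have : a 0%N = 1 by [].
  by move=> ->; rewrite mulr1.
have key : forall k, k.+1%:R <= `|Un d b phi g (NN Hphi HB k)|.
  move=> k; set n := NN Hphi HB k.
  pose h := fun x => g x + -1 * PS k.+1 x.
  have bmh : bm h by apply: bm_add => //; apply: bm_scale.
  have eg : g = fun x => PS k.+1 x + h x.
    by apply/funext => x; rewrite /h; ring.
  have eU : Un d b phi g n = Un d b phi (PS k.+1) n + Un d b phi h n.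
    by rewrite {1}eg Un_add.
  have hb : `|Un d b phi h n| <= 1.
    apply: le_trans (Un_bound Hphi d b n (C := 2 * a k.+1) bmh _) _.
      by move=> x _; rewrite /h mulN1r; exact: gclose.
    apply: le_trans (A_L Hphi HB k) _; exact: A_le1.
  have eS : PS k.+1 = fun x => (st Hphi HB k).1 x + (A Hphi HB k * (hm Hphi HB k).2) * ramp (hm Hphi HB k).1.1.2 (hm Hphi HB k).1.2 x.
    apply/funext => x; rewrite /PS big_nat_recr //=.
    by rewrite (S_eq Hphi HB k).
  have bmst : bm (st Hphi HB k).1 by rewrite (S_eq Hphi HB k); exact: bmS.
  have eS2 : Un d b phi (PS k.+1) n = Un d b phi (st Hphi HB k).1 n +
       A Hphi HB k * (hm Hphi HB k).2 * Un d b phi (ramp (hm Hphi HB k).1.1.2 (hm Hphi HB k).1.2) n.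
    rewrite eS Un_add //; last exact: bm_scale (bm_ramp _ _).
    by rewrite Un_scale //; exact: bm_ramp.
  case: (hm_good Hphi HB k) => _ _ _ hg.
  rewrite -/n in hg; rewrite -eS2 in hg.
  rewrite eU.
  have hD := ler_normD (Un d b phi (PS k.+1) n + Un d b phi h n) (- Un d b phi h n).
  rewrite addrK normrN in hD.
  have e2 : (k.+2%:R : R) = k.+1%:R + 1 by rewrite -addn1 natrD.
  rewrite e2 in hg.
  lra.
apply: esup_oo_intro => N M.
pose k := (N + Num.truncn `|M|)%N.
exists (NN Hphi HB k); split.
  apply: leq_trans (leq_addr (Num.truncn `|M|) N) _.
  by case: (hm_good Hphi HB k).
apply: lt_le_trans (key k).
have h1 := archimedean.Num.Theory.truncnS_gt `|M|.
have h2 : ((Num.truncn `|M|).+1%:R : R) <= k.+1%:R by rewrite ler_nat ltnS leq_addl.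
have h3 := ler_norm M.
lra.
Qed.
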